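(* Let $p\ge5$ be prime. There exists a 2-coloring $\chi:\mathbb{Z}/p\mathbb{Z}\to\{B,R\}$ such that for no $i\in\mathbb{Z}/p\mathbb{Z}$ and no $r\in\{1,\dots,p-1\}$ are $\chi(i),\chi(i+r),\chi(i+2r),\chi(i+3r)$ all equal, if and only if $p\in\{5,7,11\}$.
   Context: For prime $p$, every residue 4-AP $(i,i+r,i+2r,i+3r)\pmod p$ with $p\nmid r$ has four distinct residues (is non-degenerate). *)

(* Defs.v *)
From mathcomp Require Import all_boot all_order all_algebra.
Set Implicit Arguments. Unset Strict Implicit. Unset Printing Implicit Defensive.
Import GRing.Theory.
Local Open Scope ring_scope.

(* A 2-colouring chi : 'Z_p -> bool (true = B, false = R) has a monochromatic
   4-AP with common difference r (as a nat, 1 <= r <= p-1) starting at i. *)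
Definition mono_4AP (p : nat) (chi : 'Z_p -> bool) (i : 'Z_p) (r : nat) : bool :=
  let d : 'Z_p := r%:R in
  [&& chi (i + d) == chi i, chi (i + d *+ 2) == chi i & chi (i + d *+ 3) == chi i].

(* Main.v *)
Require Import Defs.
From mathcomp Require Import all_boot all_order all_algebra.
From mathcomp Require Import zify.
Import GRing.Theory.

Fixpoint ext (bad : seq bool -> bool) (s : seq bool) (k : nat) : bool :=
  if bad s then true else match k with 0 => false
  | k'.+1 => if ext bad (rcons s true) k' then ext bad (rcons s false) k' else false end.

Lemma mkseqS (g : nat -> bool) n : mkseq g n.+1 = rcons (mkseq g n) (g n).
Proof. by rewrite /mkseq -addn1 iotaD map_cat cats1. Qed.

Lemma ext_sound bad (g : nat -> bool) k n :
  ext bad (mkseq g n) k -> exists2 m, m <= n + k & bad (mkseq g m).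
Proof.
elim: k n => [|k IH] n /=; case B: (bad _) => //.
- by move=> _; exists n; rewrite ?addn0.
- by move=> _; exists n => //; rewrite leq_addr.
move=> H; have [|m m1 m2] := IH n.+1; last by exists m; rewrite // -addSnnS.
rewrite mkseqS.
by case: (g n) H; case: (ext _ _ k) => //.
Qed.
Arguments ext_sound {bad g k n}.

Definition monoN (g : nat -> bool) a r :=
  [&& g (a + r) == g a, g (a + r * 2) == g a & g (a + r * 3) == g a].

Definition badI (s : seq bool) : bool :=
  let j := (size s).-1 in let c := nth false s j in
  has (fun r => [&& nth false s (j - r) == c, nth false s (j - r * 2) == c
                  & nth false s (j - r * 3) == c])
      (iota 1 (j %/ 3)).

Lemma badI_sound (g : nat -> bool) m : badI (mkseq g m) ->
  exists a r, [/\ 0 < r, a + r * 3 < m & monoN g a r].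
Proof.
rewrite /badI size_mkseq => /hasP [r]; rewrite mem_iota => /andP [r1 r2].
have r3 : r * 3 <= m.-1 by rewrite -leq_divRL // -ltnS -(addn1 (_ %/ _)) addnC.
have m0 : 0 < m by lia.
have lt x : x <= m.-1 -> x < m by lia.
rewrite !nth_mkseq ?lt ?leq_subr // => /and3P [/eqP e1 /eqP e2 /eqP e3].
exists (m.-1 - r * 3), r; split => //; first by apply: lt; lia.
rewrite /monoN.
have -> : m.-1 - r * 3 + r = m.-1 - r * 2 by lia.
have -> : m.-1 - r * 3 + r * 2 = m.-1 - r by lia.
have -> : m.-1 - r * 3 + r * 3 = m.-1 by lia.
by rewrite e1 e2 e3 eqxx.
Qed.

Lemma E35 : ext badI [::] 35.
Proof. by vm_compute. Qed.

Lemma int_thm : forall g : nat -> bool, exists a r, [/\ 0 < r, a + r * 3 < 35 & monoN g a r].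
Proof.
move=> g; have e0 : mkseq g 0 = [::] by [].
have := @ext_sound badI g 35 0; rewrite e0.
move=> /(_ E35) [m m35 /badI_sound [a [r [r0 ar H]]]].
by exists a, r; split => //; lia.
Qed.

Lemma monoE p (chi : 'Z_p -> bool) a r :
  mono_4AP chi (a%:R)%R r = monoN (fun k => chi (k%:R)%R) a r.
Proof. by rewrite /mono_4AP /monoN /= -!mulrnA -!natrD. Qed.

Lemma hmod p (p1 : 1 < p) x y : x = y %[mod p] -> (x%:R : 'Z_p)%R = (y%:R)%R.
Proof. by move=> E; rewrite -(Zp_nat_mod p1 x) E Zp_nat_mod. Qed.

Lemma good_of_list p (p1 : 1 < p) (s : seq bool) :
  all (fun a => all (fun r => ~~ monoN (fun k => nth false s (k %% p)) a r) (iota 1 p.-1))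
      (iota 0 p) ->
  exists chi : 'Z_p -> bool, forall i r, 1 <= r <= p - 1 -> ~~ mono_4AP chi i r.
Proof.
move=> H; exists (fun x => nth false s (val x)) => i r rr.
rewrite -[i]natr_Zp monoE /monoN /= !val_Zp_nat //.
have ip : (val i) < p by move: (ltn_ord i) => h; rewrite -[p in _ < p](Zp_cast p1).
have := allP H (val i); rewrite mem_iota add0n ip => /(_ isT) /allP /(_ r).
by rewrite mem_iota; apply; lia.
Qed.

Theorem corollary12 (p : nat) (pp : prime p) (p5 : 5 <= p) :
  (exists chi : 'Z_p -> bool,
     forall (i : 'Z_p) (r : nat), 1 <= r <= p - 1 -> ~~ mono_4AP chi i r)
  <-> p \in [:: 5; 7; 11].
Proof.
have p1 : 1 < p by lia.
split.
  move=> [chi good]; apply/negPn/negP => nin.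
  have bad a r : 0 < r <= p - 1 -> monoN (fun k => chi (k%:R)%R) a r -> False.
    by move=> rr H; have := good (a%:R)%R r rr; rewrite monoE H.
  case: (leqP 13 p) => hp.
    have [a [r [r0 ar H]]] := int_thm (fun k => chi (k%:R)%R).
    by apply: (bad a r) => //; lia.
  have Hall : all (fun q => (5 <= q) ==> prime q ==> (q \in [:: 5; 7; 11])) (iota 0 13) by [].
  have := allP Hall p; rewrite mem_iota leq0n add0n hp p5 pp /= => /(_ isT) pin.
  by rewrite pin in nin.
rewrite !inE => /or3P [/eqP E|/eqP E|/eqP E]; subst p.
- by apply: (@good_of_list 5 erefl [:: false; false; false; true; true]); vm_compute.
- by apply: (@good_of_list 7 erefl [:: false; false; false; true; false; true; true]); vm_compute.
- by apply: (@good_of_list 11 erefl [:: false; false; false; true; false; false; true; false; true; true; true]); vm_compute.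
Qed.
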